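(* Let $n$ be even. The expected runtime of the SD-(1+1) EA with parameter $R$, where $n+1\le R\le n^{O(1)}$, on $\mathrm{Trap}$ is $O(2.34^n\ln n)$.
   Context: $\mathrm{Trap}\colon\{0,1\}^n\to\mathbb{R}$ is defined by $\mathrm{Trap}(x)=\sum_{i=1}^n x_i$ for $x\neq 0^n$ and $\mathrm{Trap}(0^n)=n+1$. The SD-(1+1) EA with parameter $R\ge1$ maximizing $f\colon\{0,1\}^n\to\mathbb{R}$ ($n$ even) works as follows: choose $x$ uniformly at random from $\{0,1\}^n$, set strength $r\gets 1$ and counter $u\gets0$. In each iteration: create $y$ from $x$ by flipping each bit independently with probability $r/n$; set $u\gets u+1$. If $f(y)>f(x)$, set $x\gets y$, $r\gets1$, $u\gets0$. Otherwise, if $f(y)=f(x)$ and $r=1$, set $x\gets y$; and (in the case $f(y)\le f(x)$) if $u>2(en/r)^r\ln(nR)$, set $r\gets\min\{r+1,n/2\}$ and $u\gets 0$. The runtime is the number of iterations until a global maximum is first created. *)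

(* Defs.v *)
From HB Require Import structures.
From mathcomp Require Import all_boot all_order all_algebra.
From mathcomp Require Import all_classical all_reals.
From mathcomp Require Import ereal sequences exp.
Set Implicit Arguments. Unset Strict Implicit. Unset Printing Implicit Defensive.
Import Order.TTheory GRing.Theory Num.Theory.
Local Open Scope ring_scope.

Definition bits (n : nat) := {ffun 'I_n -> bool}.

Definition Trap (n : nat) (x : bits n) : nat :=
  if x == [ffun => false] then n.+1 else (\sum_(i < n) x i)%N.

Section SDEA.
Variable R : realType.
Variable n : nat.
Variable f : bits n -> R.
Variable Rpar : R.

Definition isGlobalMax (x : bits n) : bool := [forall y, f y <= f x].

(* state = (current search point x, strength r, counter u) *)
Definition state := (bits n * nat * nat)%type.

Definition hamming (x y : bits n) : nat := #|[set i | x i != y i]|.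

Definition mutProb (r : nat) (x y : bits n) : R :=
  (r%:R / n%:R) ^+ hamming x y * (1 - r%:R / n%:R) ^+ (n - hamming x y).

Definition threshold (r : nat) : R :=
  2 * (expR 1 * n%:R / r%:R) ^+ r * ln (n%:R * Rpar).

Definition update (s : state) (y : bits n) : state :=
  let: (x, r, u) := s in
  if f x < f y then (y, 1%N, 0%N)
  else
    let x' := if (f y == f x) && (r == 1%N) then y else x in
    let u' := u.+1 in
    if threshold r < u'%:R then (x', minn r.+1 (n./2), 0%N)
    else (x', r, u').

(* One iteration as a finitely supported distribution (list of weighted
   successor states).  The process is stopped (absorbing) as soon as the
   current search point is a global maximum, i.e. once a global maximum
   has been created. *)
Definition step (s : state) : seq (R * state) :=
  if isGlobalMax s.1.1 then [:: (1, s)]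
  else [seq (mutProb s.1.2 s.1.1 y, update s y) | y <- enum {: bits n}].

Fixpoint dist (t : nat) : seq (R * state) :=
  match t with
  | 0 => [seq ((2 ^+ n)^-1, (x, 1%N, 0%N)) | x <- enum {: bits n}]
  | t'.+1 =>
      flatten [seq [seq (ps.1 * qs.1, qs.2) | qs <- step ps.2] | ps <- dist t']
  end.

(* Pr[T > t]: no global maximum created within the first t iterations *)
Definition tailProb (t : nat) : R :=
  \sum_(ps <- dist t | ~~ isGlobalMax ps.2.1.1) ps.1.

(* E[T] = sum_{t >= 0} Pr[T > t], in the extended reals (+oo if divergent) *)
Definition expectedRuntime : \bar R :=
  (\sum_(t <oo) (tailProb t)%:E)%E.

End SDEA.

(* Main.v *)
Require Import Defs.
From HB Require Import structures.
From mathcomp Require Import all_boot all_order all_algebra.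
From mathcomp Require Import all_classical all_reals.
From mathcomp Require Import ereal sequences exp.
From mathcomp Require Import topology normedtype.
From mathcomp Require Import lra ring zify.
Set Implicit Arguments. Unset Strict Implicit. Unset Printing Implicit Defensive.
Import Order.TTheory GRing.Theory Num.Theory.
Local Open Scope ring_scope.

Definition Ex (R : realType) (n : nat) (f : bits n -> R) (Rpar : R)
  (g : state n -> R) (t : nat) : R :=
  \sum_(ps <- dist f Rpar t) ps.1 * g ps.2.

Lemma Ex_S (R : realType) (n : nat) (f : bits n -> R) (Rpar : R)
  (g : state n -> R) (t : nat) :
  Ex f Rpar g t.+1 = \sum_(ps <- dist f Rpar t)
     ps.1 * \sum_(qs <- step f Rpar ps.2) qs.1 * g qs.2.
Proof.
rewrite /Ex /= big_flatten /= big_map; apply: eq_bigr => ps _.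
rewrite big_map big_distrr /=; apply: eq_bigr => qs _; by rewrite mulrA.
Qed.

Lemma dist_inv (R : realType) (n : nat) (f : bits n -> R) (Rpar : R)
  (Inv : state n -> bool) :
  (forall x, Inv (x, 1%N, 0%N)) ->
  (forall s, Inv s -> forall qs, qs \in step f Rpar s -> 0 <= qs.1 /\ Inv qs.2) ->
  forall t ps, ps \in dist f Rpar t -> 0 <= ps.1 /\ Inv ps.2.
Proof.
move=> H0 HS; elim=> [|t IH] ps /=.
  case/mapP => x _ -> /=; split => //; rewrite invr_ge0 exprn_ge0 //.
case/flattenP => l /mapP [ps' Hps' ->] /mapP [qs Hqs ->] /=.
have [w1 i1] := IH _ Hps'; have [w2 i2] := HS _ i1 _ Hqs.
by split => //; rewrite mulr_ge0.
Qed.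

Lemma tail_sum_le (R : realType) (n : nat) (f : bits n -> R) (Rpar : R)
  (Inv : state n -> bool) (Phi : state n -> R) :
  (forall x, Inv (x, 1%N, 0%N)) ->
  (forall s, Inv s -> forall qs, qs \in step f Rpar s -> 0 <= qs.1 /\ Inv qs.2) ->
  (forall s, Inv s -> 0 <= Phi s) ->
  (forall s, Inv s -> ~~ isGlobalMax f s.1.1 ->
     \sum_(qs <- step f Rpar s) qs.1 * Phi qs.2 + 1 <= Phi s) ->
  forall T, \sum_(t < T) tailProb f Rpar t <= Ex f Rpar Phi 0.
Proof.
move=> H0 HS Hpos Hdrift.
have Hd := dist_inv H0 HS.
have key t : Ex f Rpar Phi t.+1 + tailProb f Rpar t <= Ex f Rpar Phi t.
  rewrite Ex_S /tailProb [X in _ + X]big_mkcond /= -big_split /= /Ex.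
  rewrite big_seq_cond [X in _ <= X]big_seq_cond.
  apply: ler_sum => ps /andP [Hps _].
  have [w i] := Hd _ _ Hps.
  case: ifP => Hm.
  - rewrite -[X in _ + X]mulr1 -mulrDr; apply: ler_wpM2l => //.
    by apply: Hdrift => //; rewrite Hm.
  - move/negbFE: Hm => Hm.
    rewrite /step Hm big_cons big_nil /= mul1r addr0 addr0 //.
have ge0 t : 0 <= Ex f Rpar Phi t.
  rewrite /Ex big_seq; apply: sumr_ge0 => ps Hps.
  by have [w i] := Hd _ _ Hps; rewrite mulr_ge0 // Hpos.
suff: forall T, \sum_(t < T) tailProb f Rpar t + Ex f Rpar Phi T <= Ex f Rpar Phi 0.
  by move=> H T; apply: le_trans (H T); rewrite lerDl.
elim=> [|T IH]; first by rewrite big_ord0 add0r.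
apply: le_trans IH; rewrite big_ord_recr /= -addrA lerD2l addrC; exact: key.
Qed.

Lemma mutProb_prod (R : realType) (n r : nat) (x y : bits n) :
  mutProb R r x y = \prod_(i < n) (if x i != y i then r%:R / n%:R else 1 - r%:R / n%:R).
Proof.
rewrite (bigID (fun i => x i != y i)) /=.
rewrite (eq_bigr (fun _ => r%:R / n%:R : R)); last by move=> i ->.
rewrite [X in _ * X](eq_bigr (fun _ => 1 - r%:R / n%:R : R)); last by move=> i /negbTE ->.
rewrite !prodr_const /mutProb /hamming cardsE; congr (_ * _ ^+ _).
have H := cardC [pred i | x i != y i]; rewrite card_ord in H.
rewrite -[X in (X - _)%N]H addKn. by apply: eq_card => i.
Qed.

Lemma mutProb_sum (R : realType) (n r : nat) (x : bits n) :
  \sum_(y : bits n) mutProb R r x y = 1.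
Proof.
under eq_bigr do rewrite mutProb_prod.
rewrite -(bigA_distr_bigA (fun i b => if x i != b then r%:R / n%:R else 1 - r%:R / n%:R : R)).
rewrite big1 // => i _.
by rewrite big_bool /=; case: (x i) => /=; ring.
Qed.

Lemma psum_bound (R : realType) k :
  \sum_(0 <= i < k.+4.+1) ((i`!)%:R : R)^-1 + 2 / (k.+4.+1)`!%:R <= 109 / 40.
Proof.
elim: k => [|k IH].
  rewrite !big_nat_recr //= big_nil.
  rewrite /= !factS fact0; lra.
rewrite big_nat_recr //=.
apply: le_trans IH; rewrite -addrA lerD2l.
set F := (k.+4.+1)`!%:R : R.
have F0 : 0 < F by rewrite ltr0n fact_gt0.
rewrite [X in 2 / X%:R]factS natrM -/F.
set m := (k.+4.+2)%:R : R.
have m2 : 2 <= m by rewrite /m ler_nat.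
rewrite invfM mulrA.
have y0 : 0 < F^-1 by rewrite invr_gt0.
have : 2 / m <= 1 by rewrite ler_pdivrMr ?mul1r // (lt_le_trans _ m2).
move: y0; set y := F^-1; set z := 2 / m => y0 hz.
rewrite -(mulr1 y) [X in _ <= X]mulrC; nra.
Qed.

Lemma e_ub (R : realType) : expR (1 : R) <= 109 / 40.
Proof.
rewrite /expR; apply: limr_le; first exact: is_cvg_series_exp_coeff.
apply: nearW => k.
rewrite /series /= /exp_coeff /=.
apply: (@le_trans _ _ (\sum_(0 <= i < k.+4.+1) ((i`!)%:R : R)^-1)).
  have hk : (k <= k.+4.+1)%N by rewrite leqW // leqW // leqW // leqW // leqW.
  under eq_bigr do rewrite expr1n mul1r.
  rewrite [X in _ <= X](@big_cat_nat _ _ _ k) //= lerDl.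
  apply: sumr_ge0 => i _; by rewrite invr_ge0.
apply: le_trans (psum_bound R k); rewrite lerDl divr_ge0 //.
Qed.

Lemma g_step (R : realType) (a : R) (r : nat) : (0 < r)%N ->
  expR 1 * (r.+1)%:R <= a -> (a / r%:R) ^+ r <= (a / r.+1%:R) ^+ r.+1.
Proof.
move=> r0 ha.
have r0' : (r%:R : R) != 0 by rewrite pnatr_eq0 -lt0n.
have r1' : (r.+1%:R : R) != 0 by rewrite pnatr_eq0.
have a0 : 0 <= a by apply: le_trans ha; apply: mulr_ge0; [exact: expR_ge0| exact: ler0n].
have E : a / r%:R = (a / r.+1%:R) * (r.+1%:R / r%:R) by rewrite mulrA divfK.
rewrite E exprMn exprS [X in _ <= X]mulrC.
apply: ler_wpM2l; first by rewrite exprn_ge0 // divr_ge0.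
apply: (@le_trans _ _ (expR (r%:R^-1) ^+ r)).
  have -> : r.+1%:R / r%:R = 1 + r%:R^-1 :> R.
    by rewrite -addn1 natrD mulrDl divff // mul1r addrC.
  apply: lerXn2r; last exact: expR_ge1Dx.
    by rewrite nnegrE addr_ge0 // invr_ge0.
  by rewrite nnegrE expR_ge0.
rewrite -expRM_natl mulfV //.
by rewrite ler_pdivlMr // ltr0n.
Qed.

Lemma g_mono (R : realType) (a : R) (k r : nat) : (0 < r)%N ->
  expR 1 * (r + k)%:R <= a -> (a / r%:R) ^+ r <= (a / (r + k)%:R) ^+ (r + k).
Proof.
move=> r0; elim: k => [|k IH] ha; first by rewrite addn0.
apply: le_trans (IH _) _.
  apply: le_trans ha; rewrite ler_wpM2l ?expR_ge0 // ler_nat addnS; exact: leqnSn.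
rewrite addnS; apply: g_step; first by rewrite addn_gt0 r0.
by rewrite -addnS.
Qed.

Definition zerob (n : nat) : bits n := [ffun => false].

Lemma Trap_zero n : Trap (zerob n) = n.+1.
Proof. by rewrite /Trap eqxx. Qed.

Lemma Trap_le n (x : bits n) : (Trap x <= n.+1)%N.
Proof.
rewrite /Trap; case: ifP => // _.
apply: leq_trans (leqnSn n).
rewrite -[X in (_ <= X)%N]card_ord -sum1_card.
by apply: leq_sum => i _; case: (x i).
Qed.

Lemma nonopt_Trap (R : realType) n (x : bits n) :
  ~~ isGlobalMax (fun x : bits n => (Trap x)%:R : R) x -> (Trap x <= n)%N.
Proof.
move=> H; have := Trap_le x; rewrite leq_eqVlt ltnS => /orP [/eqP E|//].
move: H; rewrite /isGlobalMax; case/forallPn => y; rewrite E ler_nat.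
by rewrite Trap_le.
Qed.

Lemma hamming_le n (x y : bits n) : (hamming x y <= n)%N.
Proof. by rewrite /hamming -[X in (_ <= X)%N]card_ord max_card. Qed.

Lemma mutProb_ge0 (R : realType) n r (x y : bits n) : (r <= n)%N ->
  0 <= mutProb R r x y.
Proof.
move=> rn; rewrite /mutProb; apply: mulr_ge0; apply: exprn_ge0.
  by rewrite divr_ge0.
rewrite subr_ge0; case: n x y rn => [|n] x y rn; first by rewrite invr0 mulr0.
by rewrite ler_pdivrMr ?ltr0n // mul1r ler_nat.
Qed.

Lemma mutProb_half (R : realType) n (x y : bits n) : ~~ odd n -> (0 < n)%N ->
  mutProb R n./2 x y = (2 ^+ n)^-1.
Proof.
move=> ev n0.
have hn : (n./2)%:R / n%:R = 2^-1 :> R.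
  have E : n = (n./2).*2 by rewrite -{1}(odd_double_half n) (negbTE ev).
  rewrite [X in _ / X%:R]E -muln2 natrM invfM mulrA divff ?mul1r //.
  rewrite pnatr_eq0 -lt0n -double_gt0 -E //.
rewrite /mutProb hn.
have -> : 1 - 2^-1 = 2^-1 :> R by field.
by rewrite -exprD subnKC ?hamming_le // exprVn.
Qed.

Definition Bf (R : realType) (h : nat) (K M : R) (r u : nat) : R :=
  if (r < h)%N then K + (h - r)%:R * (M + 1) - Num.min (u%:R) M else K.

Definition Phi (R : realType) n (A K M : R) (s : state n) : R :=
  A * (n.+1 - Trap s.1.1)%:R + Bf n./2 K M s.1.2 s.2.

Definition nr (R : realType) n (Rpar : R) (r u : nat) : nat * nat :=
  if threshold n Rpar r < u.+1%:R then (minn r.+1 n./2, 0%N) else (r, u.+1).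

Lemma Bf_ge0 (R : realType) h (K M : R) r u : 0 <= K -> 0 <= M -> 0 <= Bf h K M r u.
Proof.
move=> K0 M0; rewrite /Bf; case: ifP => // rh.
rewrite -addrA addr_ge0 // subr_ge0.
apply: (@le_trans _ _ M); first by rewrite ge_min lexx orbT.
apply: (@le_trans _ _ (M + 1)); first by rewrite lerDl.
rewrite -[X in X <= _]mul1r ler_wpM2r ?addr_ge0 // ler1n subn_gt0 //.
Qed.

Lemma Bf_le (R : realType) h (K M : R) r u : 0 <= K -> 0 <= M ->
  Bf h K M r u <= K + h%:R * (M + 1).
Proof.
move=> K0 M0; rewrite /Bf; case: ifP => rh; last first.
  by rewrite lerDl mulr_ge0 // addr_ge0.
rewrite -addrA lerD2l lerBlDr; apply: ler_wpDr; first by rewrite le_min ler0n.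
by rewrite ler_wpM2r ?addr_ge0 // ler_nat leq_subr.
Qed.

Lemma Bf_dec (R : realType) n (Rpar K M : R) r u : 0 <= M ->
  (r < n./2)%N -> threshold n Rpar r <= M ->
  Bf n./2 K M (nr n Rpar r u).1 (nr n Rpar r u).2 + 1 <= Bf n./2 K M r u.
Proof.
move=> M0 rh thM; rewrite /nr.
case: (ltrP (threshold n Rpar r) u.+1%:R) => Ht /=; rewrite /Bf rh.
  have -> : minn r.+1 n./2 = r.+1 by apply/minn_idPl.
  rewrite (@min_l _ _ 0%:R M) // subr0.
  case: ifP => rh2.
    have -> : (n./2 - r)%N = (n./2 - r.+1).+1 by rewrite subnSK.
    rewrite -[(n./2 - r.+1).+1]addn1 natrD mulrDl mul1r.
    have hm : Num.min u%:R M <= M by rewrite ge_min lexx orbT.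
    lra.
  have -> : (n./2 - r)%N = 1%N.
    by move/negbT: rh2; rewrite -leqNgt => h1; lia.
  have hm : Num.min u%:R M <= M by rewrite ge_min lexx orbT.
  rewrite mul1r; lra.
have Hu : u.+1%:R <= M by apply: le_trans thM.
rewrite (@min_l _ _ u.+1%:R M) // (@min_l _ _ u%:R M); last first.
  by apply: le_trans Hu; rewrite ler_nat.
rewrite -[u.+1]addn1 natrD; lra.
Qed.

Lemma update_bound (R : realType) n (Rpar A K M : R) (x : bits n) r u y :
  0 <= K -> 0 <= M -> A = K + (n./2)%:R * (M + 1) ->
  Phi A K M (update (fun x : bits n => (Trap x)%:R : R) Rpar (x, r, u) y) <=
  A * (n.+1 - Trap x)%:R +
  (if (Trap x < Trap y)%N then 0 else Bf n./2 K M (nr n Rpar r u).1 (nr n Rpar r u).2).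
Proof.
move=> K0 M0 HA.
have A0 : 0 <= A by rewrite HA addr_ge0 // mulr_ge0 // addr_ge0.
rewrite /update ltr_nat; case: ifP => lt.
  rewrite /Phi /= addr0.
  apply: (@le_trans _ _ (A * (n.+1 - Trap y)%:R + A)).
    by rewrite lerD2l HA Bf_le.
  rewrite -[X in _ + X]mulr1 -mulrDr ler_wpM2l // natr1 ler_nat.
  have := Trap_le y; lia.
set x' := (if _ then y else x).
have Tx : Trap x' = Trap x.
  rewrite /x'; case: ifP => // /andP [/eqP E _].
  by apply/eqP; rewrite -(eqr_nat R) E.
rewrite /nr; case: ifP => Ht; by rewrite /Phi /= Tx.
Qed.

Lemma half_le n : (n./2 <= n)%N.
Proof. by rewrite leq_half_double -addnn leqW // leq_addl. Qed.

Lemma drift (R : realType) n (Rpar K M A : R) (s : state n) :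
  ~~ odd n -> (2 <= n)%N -> K = 2 ^+ n -> 0 <= M ->
  A = K + (n./2)%:R * (M + 1) ->
  (forall r, (0 < r)%N -> (r < n./2)%N -> threshold n Rpar r <= M) ->
  (0 < s.1.2 <= n./2)%N ->
  ~~ isGlobalMax (fun x : bits n => (Trap x)%:R : R) s.1.1 ->
  \sum_(qs <- step (fun x : bits n => (Trap x)%:R : R) Rpar s) qs.1 * Phi A K M qs.2 + 1
    <= Phi A K M s.
Proof.
case: s => [[x r] u] /= ev n2 HK M0 HA Hth /andP [r0 rh] nopt.
have K0 : 0 <= K by rewrite HK exprn_ge0.
have n0 : (0 < n)%N by apply: leq_trans n2.
rewrite /step /= (negbTE nopt) big_map big_enum /=.
set D := A * (n.+1 - Trap x)%:R.
set B' := Bf n./2 K M (nr n Rpar r u).1 (nr n Rpar r u).2.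
have rn : (r <= n)%N by apply: leq_trans rh (half_le n).
have mge0 y : 0 <= mutProb R r x y by apply: mutProb_ge0.
have B'0 : 0 <= B' by apply: Bf_ge0.
have Tx := nonopt_Trap nopt.
have step1 : \sum_(y in {: bits n}) mutProb R r x y * Phi A K M (update (fun x0 : bits n => (Trap x0)%:R) Rpar (x, r, u) y)
   <= \sum_(y : bits n) mutProb R r x y * (D + (if (Trap x < Trap y)%N then 0 else B')).
  apply: ler_sum => y _; apply: ler_wpM2l => //; exact: update_bound.
apply: le_trans (lerD step1 (lexx 1)) _.
under eq_bigr do rewrite mulrDr.
rewrite big_split /= -big_distrl /= mutProb_sum mul1r.
have Hz : \sum_(y : bits n) mutProb R r x y * (if (Trap x < Trap y)%N then 0 else B')
   <= B' * (1 - mutProb R r x (zerob n)).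
  rewrite (bigD1 (zerob n)) //= Trap_zero ltnS Tx mulr0 add0r.
  have Sm : 1 - mutProb R r x (zerob n) = \sum_(y | y != zerob n) mutProb R r x y.
    by rewrite -(mutProb_sum R r x) (bigD1 (zerob n)) //= addrC addrK.
  rewrite Sm mulr_sumr.
  apply: ler_sum => y _; rewrite mulrC; apply: ler_wpM2r => //.
  by case: ifP.
rewrite /Phi /= -addrA lerD2l.
apply: le_trans (lerD Hz (lexx 1)) _.
case: (ltnP r n./2) => [rlt|rge].
  apply: le_trans (@Bf_dec R n Rpar K M r u M0 rlt (Hth _ r0 rlt)); rewrite lerD2r /B'.
  rewrite ler_piMr // lerBlDr lerDl //.
have req : r = n./2 by apply/eqP; rewrite eqn_leq rh rge.
have -> : B' = K.
  rewrite /B' /nr req (_ : minn (n./2).+1 n./2 = n./2); last by apply/minn_idPr; exact: leqnSn.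
  by case: ifP => _; rewrite /Bf /= ltnn.
have h2 : (2:R) ^+ n != 0 by rewrite expf_neq0 // pnatr_eq0.
by rewrite /Bf req ltnn mutProb_half // HK mulrBr mulr1 divff // subrK.
Qed.

Lemma card_bits n : #|{: bits n}| = (2 ^ n)%N.
Proof. by rewrite card_ffun card_bool card_ord. Qed.

Lemma runtime_bound (R : realType) n (Rpar : R) :
  ~~ odd n -> (2 <= n)%N -> 1 <= n%:R * Rpar ->
  (expectedRuntime (fun x : bits n => (Trap x)%:R : R) Rpar <=
   ((n.+2)%:R * (2 ^+ n + (n./2)%:R *
       (2 * (2 * expR 1) ^+ (n./2) * ln (n%:R * Rpar) + 1)))%:E)%E.
Proof.
move=> ev n2 nR1.
set f := (fun x : bits n => (Trap x)%:R : R).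
set h := n./2.
set K : R := 2 ^+ n.
set M : R := 2 * (2 * expR 1) ^+ h * ln (n%:R * Rpar).
set A : R := K + h%:R * (M + 1).
have ln0 : 0 <= ln (n%:R * Rpar) by apply: ln_ge0.
have M0 : 0 <= M by rewrite /M mulr_ge0 // mulr_ge0 // exprn_ge0 // mulr_ge0 // expR_ge0.
have K0 : 0 <= K by rewrite exprn_ge0.
have A0 : 0 <= A by rewrite addr_ge0 // mulr_ge0 // addr_ge0.
have En : n = h.*2 by rewrite /h -{1}(odd_double_half n) (negbTE ev).
have h1 : (0 < h)%N by rewrite -double_gt0 -En; apply: leq_trans n2.
have Hth : forall r, (0 < r)%N -> (r < h)%N -> threshold n Rpar r <= M.
  move=> r r0 rh; rewrite /threshold /M ler_wpM2r // ler_wpM2l //.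
  have := @g_mono R (expR 1 * n%:R) (h - r) r r0.
  rewrite subnKC ?(ltnW rh) // => H.
  have hn : n%:R = 2 * h%:R :> R by rewrite {1}En -mul2n natrM.
  have h0 : h%:R != 0 :> R by rewrite pnatr_eq0 -lt0n.
  have -> : 2 * expR 1 = expR 1 * n%:R / h%:R :> R.
    by rewrite hn mulrA mulfK // mulrC.
  apply: H; rewrite ler_wpM2l ?expR_ge0 // ler_nat En -addnn leq_addr //.
set Inv := fun s : state n => (0 < s.1.2 <= h)%N.
have HS : forall s, Inv s -> forall qs, qs \in step f Rpar s -> 0 <= qs.1 /\ Inv qs.2.
  case=> [[x r] u] /andP [r0 rh] qs; rewrite /step /=.
  case: ifP => _.
    by rewrite inE => /eqP -> /=; split => //; rewrite /Inv /= r0 rh.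
  case/mapP => y _ -> /=; split.
    by apply: mutProb_ge0; apply: leq_trans rh (half_le n).
  rewrite /update /Inv; case: ifP => _ /=; first by rewrite h1.
  case: ifP => _ /=; last by rewrite r0 rh.
  by rewrite geq_minr andbT leq_min h1.
have Hpos : forall s, Inv s -> 0 <= Phi A K M s.
  by move=> s _; rewrite /Phi addr_ge0 // ?mulr_ge0 // Bf_ge0.
have Hdrift : forall s, Inv s -> ~~ isGlobalMax f s.1.1 ->
   \sum_(qs <- step f Rpar s) qs.1 * Phi A K M qs.2 + 1 <= Phi A K M s.
  by move=> s Is nopt; apply: drift.
have H0 : forall x, Inv (x, 1%N, 0%N) by move=> x; rewrite /Inv /= h1.
have Hsum := tail_sum_le H0 HS Hpos Hdrift.
have HE0 : Ex f Rpar (Phi A K M) 0 <= (n.+2)%:R * A.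
  rewrite /Ex /= big_map.
  apply: (@le_trans _ _ (\sum_(x <- enum {: bits n}) (2 ^+ n)^-1 * ((n.+2)%:R * A))).
    apply: ler_sum => x _; apply: ler_wpM2l; first by rewrite invr_ge0 exprn_ge0.
    have -> : (n.+2)%:R * A = A * n.+1%:R + A by rewrite -natr1 mulrDl mul1r mulrC.
    rewrite /Phi /=.
    apply: lerD; last by apply: Bf_le.
    by apply: ler_wpM2l => //; rewrite ler_nat leq_subr.
  rewrite big_enum /= sumr_const card_bits -[_ *+ (2 ^ n)%N]mulr_natr natrX mulrAC mulVf ?mul1r //.
have Hd := dist_inv H0 HS.
have tail0 : forall t, 0 <= tailProb f Rpar t.
  move=> t; rewrite /tailProb big_seq_cond; apply: sumr_ge0 => ps /andP [Hps _].
  by have [] := Hd _ _ Hps.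
rewrite /expectedRuntime; apply: lime_le.
  by apply: is_cvg_nneseries => k _ _; rewrite lee_fin.
apply: nearW => T; rewrite sumEFin lee_fin big_mkord.
by apply: le_trans (Hsum T) HE0.
Qed.

Lemma binom_lb (R : realType) (d : R) : 0 <= d ->
  forall m k, d ^+ k * 'C(m, k)%:R <= (1 + d) ^+ m.
Proof.
move=> d0; elim=> [|m IH] k.
  by case: k => [|k]; rewrite ?bin0 ?bin0n ?mulr0 ?expr0 ?mulr1.
case: k => [|k]; first by rewrite bin0 expr0 mulr1 exprn_ege1 // lerDl.
rewrite binS natrD mulrDr [(1 + d) ^+ m.+1]exprS mulrDl mul1r.
apply: lerD; first exact: IH.
rewrite exprS -mulrA; apply: ler_wpM2l => //; exact: IH.
Qed.

Lemma bin3_ge (h : nat) : (4 <= h)%N -> (2 * (h.+1) ^ 2 <= 75 * 'C(h, 3))%N.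
Proof.
move=> h4.
have E : ('C(h, 3) * 6 = h * (h - 1) * (h - 2))%N.
  have := bin_ffact h 3; rewrite !ffactnS ffactn0 muln1 => ->.
  by rewrite -!subn1 -subnDA mulnA.
suff : (2 * h.+1 ^ 2 * 6 <= 75 * 'C(h, 3) * 6)%N by rewrite leq_pmul2r.
rewrite -[(75 * _ * 6)%N]mulnA E; clear E.
move: h4; case: h => [|[|[|[|k]]]] //= _.
rewrite !subn1 /= !subSS subn0; nia.
Qed.

Lemma final_num (R : realType) (c h : nat) (L lnn q : R) :
  (4 <= h)%N -> 1 <= lnn -> 0 <= L -> L <= (c.+1)%:R * lnn -> 4 <= q -> q <= 109/20 ->
  ((h.*2).+2)%:R * (4 ^+ h + h%:R * (2 * q ^+ h * L + 1))
   <= (2 * (2 * c%:R + 3) * (75/2 * 250 ^+ 3)) * ((234/100) ^+ 2) ^+ h * lnn.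
Proof.
move=> h4 lnn1 L0 Lc q4 qub.
set Q := q ^+ h.
have Q1 : 1 <= Q by apply: exprn_ege1; lra.
have Q4 : 4 ^+ h <= Q.
  apply: lerXn2r => //; rewrite nnegrE; lra.
set P := Q * lnn.
have Q0 : 0 <= Q by apply: le_trans Q1.
have P1 : Q <= P by rewrite /P ler_peMr.
have QL : Q * L <= (c.+1)%:R * P.
  by rewrite /P mulrCA ler_wpM2l.
set hr := h%:R : R.
set cr := c%:R : R.
have hr0 : 0 <= hr by rewrite /hr ler0n.
have cr0 : 0 <= cr by rewrite /cr ler0n.
have P0 : 0 <= P by apply: le_trans Q0 P1.
have f1 : hr * (Q * L) <= hr * (cr * P) + hr * P.
  apply: le_trans (ler_wpM2l hr0 QL) _.
  by rewrite -natr1 mulrDl mul1r mulrDr.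
have f2 : hr <= hr * P by rewrite ler_peMr // (le_trans Q1 P1).
have f4 : 0 <= cr * P by rewrite mulr_ge0.
have inner : 4 ^+ h + hr * (2 * Q * L + 1) <= (1 + hr) * (2 * cr + 3) * P.
  have : 4 ^+ h <= P by apply: le_trans Q4 P1.
  have -> : (1 + hr) * (2 * cr + 3) * P = 2 * (cr * P) + 3 * P + 2 * (hr * (cr * P)) + 3 * (hr * P) by ring.
  have -> : hr * (2 * Q * L + 1) = 2 * (hr * (Q * L)) + hr by ring.
  move=> f3; lra.
have H2 : ((h.*2).+2)%:R = 2 * (1 + hr) :> R.
  by rewrite /hr -muln2; ring.
rewrite H2.
have hh0 : 0 <= 2 * (1 + hr) by rewrite mulr_ge0 // addr_ge0.
apply: le_trans (ler_wpM2l hh0 inner) _.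
have -> : 2 * (1 + hr) * ((1 + hr) * (2 * cr + 3) * P) =
   (2 * (2 * cr + 3)) * ((1 + hr) ^+ 2 * (Q * lnn)) by rewrite /P; ring.
have -> : 2 * (2 * cr + 3) * (75 / 2 * 250 ^+ 3) * ((234 / 100) ^+ 2) ^+ h * lnn =
   (2 * (2 * cr + 3)) * ((75 / 2 * 250 ^+ 3) * (((234 / 100) ^+ 2) ^+ h * lnn)) by ring.
apply: ler_wpM2l; first by rewrite mulr_ge0 // addr_ge0 // mulr_ge0.
set Cb : R := 'C(h, 3)%:R.
have Cb0 : 0 <= Cb by rewrite /Cb ler0n.
have B1 : (1 + hr) ^+ 2 <= 75 / 2 * Cb.
  have H := bin3_ge h4; rewrite -(ler_nat R) in H.
  have E1 : ((2 * h.+1 ^ 2)%N%:R : R) = 2 * (1 + hr) ^+ 2 by rewrite /hr; ring.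
  have E2 : ((75 * 'C(h, 3))%N%:R : R) = 75 * Cb by rewrite /Cb natrM.
  rewrite E1 E2 in H; lra.
have B2 : Cb <= 250 ^+ 3 * (1 + 1/250) ^+ h.
  have := @binom_lb R (1/250) ltac:(lra) h 3; rewrite -/Cb => H.
  have -> : Cb = 250 ^+ 3 * ((1/250) ^+ 3 * Cb) by rewrite mulrA -exprMn mul1r divff // expr1n mul1r.
  by apply: ler_wpM2l => //; rewrite exprn_ge0.
have B3 : (1 + 1/250) ^+ h * Q <= ((234/100) ^+ 2) ^+ h.
  rewrite /Q -exprMn; apply: lerXn2r; rewrite ?nnegrE; try lra.
have lnn0 : 0 <= lnn by lra.
have QP0 : 0 <= Q * lnn by rewrite mulr_ge0.
apply: le_trans (ler_wpM2r QP0 B1) _.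
apply: le_trans (ler_wpM2r QP0 (ler_wpM2l _ B2)) _; first lra.
have -> : 75 / 2 * (250 ^+ 3 * (1 + 1 / 250) ^+ h) * (Q * lnn) =
   (75 / 2 * 250 ^+ 3) * (((1 + 1 / 250) ^+ h * Q) * lnn) by ring.
apply: ler_wpM2l; first by rewrite mulr_ge0 // exprn_ge0.
rewrite ler_pM2r; [exact: B3 | lra].
Qed.

Theorem mainTheorem7 (R : realType) (c : nat) :
  exists C : R, exists N : nat,
    forall (n : nat) (Rpar : R),
      (N <= n)%N -> ~~ odd n ->
      n.+1%:R <= Rpar -> Rpar <= n%:R ^+ c ->
      (expectedRuntime (fun x : bits n => (Trap x)%:R) Rpar
        <= (C * (234 / 100) ^+ n * ln (n%:R : R))%:E)%E.
Proof.
exists (2 * (2 * c%:R + 3) * (75 / 2 * 250 ^+ 3)), 8%N.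
move=> n Rpar n8 ev hR1 hR2.
have n2 : (2 <= n)%N by apply: leq_trans n8.
have n1 : 1 <= n%:R :> R by rewrite ler1n; apply: leq_trans n8.
have R1 : 1 <= Rpar by apply: le_trans hR1; rewrite ler1n.
have nR1 : 1 <= n%:R * Rpar by rewrite mulr_ege1.
apply: le_trans (runtime_bound ev n2 nR1) _.
rewrite lee_fin.
set h := n./2.
have En : n = h.*2 by rewrite /h -{1}(odd_double_half n) (negbTE ev).
have e4 : (2 : R) ^+ n = 4 ^+ h.
  by rewrite {1}En -mul2n exprM; congr (_ ^+ _); rewrite expr2; lra.
have eb : (234 / 100 : R) ^+ n = ((234 / 100) ^+ 2) ^+ h by rewrite {1}En -mul2n exprM.
have en2 : (n.+2)%:R = ((h.*2).+2)%:R :> R by rewrite -En.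
rewrite e4 en2 eb.
have h4 : (4 <= h)%N by rewrite -leq_double -En.
have eub := e_ub R.
have elb : 2 <= expR (1 : R) by have := expR_ge1Dx (1 : R); lra.
have n8r : 8 <= n%:R :> R by rewrite (ler_nat R 8 n).
have n0 : 0 < n%:R :> R by lra.
have lnn1 : 1 <= ln (n%:R : R).
  rewrite -[X in X <= _](expRK 1) ler_ln ?posrE ?expR_gt0 //; lra.
have L0 : 0 <= ln (n%:R * Rpar) by apply: ln_ge0.
have Lc : ln (n%:R * Rpar) <= (c.+1)%:R * ln (n%:R : R).
  have -> : (c.+1)%:R * ln (n%:R : R) = ln (n%:R ^+ c.+1) by rewrite lnXn // mulr_natl.
  rewrite ler_ln ?posrE ?exprn_gt0 //; last by lra.
  by rewrite exprS ler_wpM2l //; lra.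
apply: final_num => //; lra.
Qed.
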